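(* Let $n,t$ be positive integers and let $\mathcal{B}$ be a partition of $[n]$ into $t$ nonempty blocks. Define the set $\mathcal{R}$ of required pairs as the smallest set of pairs $(\underline{i},\mathcal{B}')$, with $\underline{i}\in[n]$ and $\mathcal{B}'\subseteq\mathcal{B}$, such that: - $(1,\mathcal{B})\in\mathcal{R}$; - whenever $(\underline{i},\mathcal{B}')\in\mathcal{R}$ with $\mathcal{B}'\neq\varnothing$, then $(\omega(\underline{i},\underline{B})+_n1,\ \mathcal{B}'\setminus\{\underline{B}\})\in\mathcal{R}$ for every $\underline{B}\in\mathcal{B}'$. These are exactly the table entries $K[\underline{i},\mathcal{B}']$ that must be computed in order to evaluate $K[1,\mathcal{B}]$ by the recurrence $$K[\underline{i},\mathcal{B}']=\min_{\underline{B}\in\mathcal{B}'}\{\delta(\underline{i},\underline{B})+K[\omega(\underline{i},\underline{B})+_n1,\mathcal{B}'\setminus\{\underline{B}\}]\}.$$ Then for every proper subset $\mathcal{B}'\subsetneq\mathcal{B}$ and every $\underline{i}\in\bigcup_{B\in\mathcal{B}'}B$, the pair $(\underline{i}+_n1,\mathcal{B}')$ does not belong to $\mathcal{R}$. In other words, the entry $K[\underline{i}+_n1,\mathcal{B}']$ is not required to be computed.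
   Context: Each block $B\in\mathcal{B}$ is written as an increasing sequence $\langle i_1<\cdots<i_\ell\rangle$ of its elements. For $\underline{i}\in[n]$: - If $\underline{i}\le i_1$ or $i_\ell<\underline{i}$, then $\omega(\underline{i},B)=i_\ell$. - Otherwise $i_l<\underline{i}\le i_{l+1}$ for a unique $l\in[\ell-1]$, and $\omega(\underline{i},B)=i_l$. $\delta(\underline{i},B)=0$ if $\underline{i}\le i_1$ and $i_\ell<n$, and $\delta(\underline{i},B)=1$ otherwise. $a+_n1$ denotes $a+1$ for $a<n$, and $n+_n1=1$. Here $K[\underline{i},\mathcal{B}']$ is the dynamic programming table of the Train Marshalling Problem. Its entry is the minimum number of segments of $A(n)$ (the infinite concatenation of copies of $\langle1,\ldots,n\rangle$) needed to place the blocks of $\mathcal{B}'$ so that the blocks do not interleave and no element is placed before position $\underline{i}$ of the first segment. *)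

(* Defs.v *)
From mathcomp Require Import all_boot.
Set Implicit Arguments. Unset Strict Implicit. Unset Printing Implicit Defensive.

(* Convention: the ground set [n] = {1,...,n} is represented by 'I_n,
   the element k : 'I_n standing for the integer k+1.  All comparisons are
   shifted consistently, and  a +_n 1  becomes  (a.+1 %% n). *)

Section TMP.
Variable n : nat.

Definition blk_first (B : {set 'I_n}) : nat := \big[minn/n]_(j in B) val j.
Definition blk_last (B : {set 'I_n}) : nat := \max_(j in B) val j.

Definition omega (i : nat) (B : {set 'I_n}) : nat :=
  if (i <= blk_first B) || (blk_last B < i) then blk_last B
  else \max_(j in B | val j < i) val j.

Inductive required (P : {set {set 'I_n}}) : nat -> {set {set 'I_n}} -> Prop :=
| req_start : required P 0 P
| req_step (i : nat) (P' : {set {set 'I_n}}) (B : {set 'I_n}) :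
    required P i P' -> B \in P' ->
    required P ((omega i B).+1 %% n) (P' :\ B).
End TMP.

(* Main.v *)
Require Import Defs.
From mathcomp Require Import all_boot.

Lemma required_sub n (P : {set {set 'I_n}}) i Q : required P i Q -> Q \subset P.
Proof.
elim=> [|k P' B _ IH _]; first exact: subxx.
exact: subset_trans (subD1set _ _) IH.
Qed.

Lemma omega_in n (B : {set 'I_n}) i : B != set0 ->
  exists2 j : 'I_n, j \in B & omega i B = val j.
Proof.
move=> /set0Pn [x xB].
have hl : exists2 j : 'I_n, j \in B & blk_last B = val j.
  have cB : 0 < #|[pred j in B]| by apply/card_gt0P; exists x.
  have [j0 j0B e] := eq_bigmax_cond (fun j : 'I_n => val j) cB.
  by exists j0.
rewrite /omega; case: ifP => // /norP [h1 h2].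
rewrite -ltnNge in h1; rewrite -leqNgt in h2.
have [y /andP [yB yi]] : exists y, (y \in B) && (val y < i).
  apply/existsP; apply: contraT; rewrite negb_exists => /forallP H.
  have : i <= blk_first B.
    rewrite /blk_first; apply: (big_ind (fun v => i <= v)).
    - case: hl => j _ e; apply: leq_trans h2 _; rewrite e; exact: ltnW (ltn_ord j).
    - by move=> a b ha hb; rewrite leq_min ha hb.
    - move=> j jB; have := H j; rewrite jB /= -leqNgt; exact.
  by rewrite leqNgt h1.
have cB : 0 < #|[pred j | (j \in B) && (val j < i)]|.
  by apply/card_gt0P; exists y; rewrite inE yB yi.
have [j0 /andP [j0B _] e] := eq_bigmax_cond (fun j : 'I_n => val j) cB.
by exists j0.
Qed.

Theorem lemma1 (n t : nat) (P : {set {set 'I_n}}) :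
  0 < n -> 0 < t ->
  partition P [set: 'I_n] -> set0 \notin P -> #|P| = t ->
  forall P' : {set {set 'I_n}}, P' \proper P ->
  forall i : 'I_n, i \in cover P' ->
  ~ required P (i.+1 %% n) P'.
Proof.
move=> n0 _ /and3P [_ triv _] P0 _ P' prP' i icov req.
inversion req as [e1 e2|k Q B reqQ BQ e1 e2].
  by subst; rewrite properE subxx in prP'.
have QP := @required_sub _ _ _ _ reqQ.
have BP : B \in P by apply: (subsetP QP).
have Bn0 : B != set0 by apply: contraNneq P0 => <-.
have [j jB ej] := @omega_in _ B k Bn0.
rewrite ej in e1.
have eij : i = j.
  apply: val_inj => /=.
  move/eqP: e1; rewrite -(addn1 (val j)) -(addn1 (val i)) eqn_modDr (modn_small (ltn_ord j)) (modn_small (ltn_ord i)).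
  by move/eqP.
subst j.
have /bigcupP [B' B'P' iB'] := icov.
have B'P : B' \in P by apply: (subsetP (proper_sub prP')).
have neq : B != B'.
  apply: contraTneq B'P' => <-; rewrite -e2 !inE eqxx.
  done.
have := trivIsetP triv B B' BP B'P neq.
move/disjoint_setI0/setP/(_ i); rewrite !inE jB iB'.
done.
Qed.
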